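(* Assume the context distribution is stationary, i.e. $p(x,t)=p(x)p(t)$ on $\mathcal{X}\times[0,T]$ and $p(x\mid t')=p(x)$. Suppose $\pi_0(a\mid x,t)>0$ for all $x\in\mathcal{X}$, $t\in[0,T]$, $a\in\mathcal{A}$; that $p(\phi(t'))>0$; and that $\Delta_q(x,t,t',a)=\Delta_{\hat f}(x,t,t',a)$ for all $x\in\mathcal{X}$, $a\in\mathcal{A}$ and $t\in[0,T]$ with $\mathbb{I}_\phi(t,t')=1$. Then $$n\,\mathbb{V}_{\mathcal{D}}\big[\nabla_\zeta\hat V^{\mathrm{OPFV}}_{t'}(\pi_\zeta;\mathcal{D})\big]=\mathbb{E}_{p(x,t)\pi_0(a\mid x,t)}\!\left[\Big(\frac{\mathbb{I}_\phi(t,t')}{p(\phi(t'))}\frac{\pi_\zeta(a\mid x,t')}{\pi_0(a\mid x,t)}s_\zeta(x,t',a)\Big)^2\sigma^2(x,t,a)\right]$$ $$+\mathbb{E}_{p(x,t)}\!\left[\Big(\frac{\mathbb{I}_\phi(t,t')}{p(\phi(t'))}\Big)^2\mathbb{V}_{\pi_0(a\mid x,t)}\!\Big[\frac{\pi_\zeta(a\mid x,t')}{\pi_0(a\mid x,t)}\Delta_{q,\hat f}(x,t',a)s_\zeta(x,t',a)\Big]\right]$$ $$+\mathbb{V}_{p(t)}\!\left[\frac{\mathbb{I}_\phi(t,t')}{p(\phi(t'))}\right]\mathbb{E}_{p(x)}\!\left[\mathbb{E}_{\pi_\zeta(a\mid x,t')}\big[\Delta_{q,\hat f}(x,t',a)s_\zeta(x,t',a)\big]^2\right]+\mathbb{V}_{p(x)}\!\left[\mathbb{E}_{\pi_\zeta(a\mid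 x,t')}[q(x,t',a)s_\zeta(x,t',a)]\right].$$
   Context: Contexts $x\in\mathcal{X}$, finite action set $\mathcal{A}$, continuous time $t$, rewards $r\in[0,r_{\max}]$. Logged data $\mathcal{D}=\{(x_i,t_i,a_i,r_i)\}_{i=1}^n$: $n$ i.i.d. draws $(x,t)\sim p(x,t)$ supported on $\mathcal{X}\times[0,T]$, $a\sim\pi_0(a\mid x,t)$, $r\sim p(r\mid x,t,a)$; reward distributions defined for all $t\ge0$; $q(x,t,a)=\mathbb{E}[r\mid x,t,a]$, $\sigma^2(x,t,a)=\mathbb{V}[r\mid x,t,a]$. Target time $t'>T$. $\pi_\zeta(a\mid x,t)$ is a policy differentiable in a parameter vector $\zeta$, with score $s_\zeta(x,t,a)=\nabla_\zeta\log\pi_\zeta(a\mid x,t)$. A time feature function $\phi$ maps times to labels; $\mathbb{I}_\phi(t,t')=\mathbb{I}\{\phi(t)=\phi(t')\}$, $p(\phi(t'))=\int_0^Tp(s)\mathbb{I}_\phi(s,t')ds$ with $p(t)$ the marginal density of $t$. $\hat f$ is a fixed regressor. The OPFV gradient estimator is $$\nabla_\zeta\hat V^{\mathrm{OPFV}}_{t'}(\pi_\zeta;\mathcal{D})=\frac1n\sum_{i=1}^n\left\{\frac{\mathbb{I}_\phi(t_i,t')}{p(\phi(t'))}\frac{\pi_\zeta(a_i\mid x_i,t')}{\pi_0(a_i\mid x_i,t_i)}\big(r_i-\hat f(x_i,t_i,a_i)\big)s_\zeta(x_i,t',a_i)+\mathbb{E}_{\pi_\zeta(a\mid x_i,t')}\big[\hat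 f(x_i,t',a)s_\zeta(x_i,t',a)\big]\right\}.$$ $\Delta_q(x,t,t',a)=q(x,t,a)-q(x,t',a)$, $\Delta_{\hat f}(x,t,t',a)=\hat f(x,t,a)-\hat f(x,t',a)$, $\Delta_{q,\hat f}(x,t,a)=q(x,t,a)-\hat f(x,t,a)$. Variances and squares of vector-valued quantities are understood coordinatewise (the identity holds for each coordinate of $\zeta$, with $s_\zeta$ replaced by its corresponding coordinate). *)

(* Defs.v *)
From HB Require Import structures.
From mathcomp Require Import all_boot all_order all_algebra.
From mathcomp Require Import all_classical all_reals all_analysis.
Set Implicit Arguments. Unset Strict Implicit. Unset Printing Implicit Defensive.
Import Order.TTheory GRing.Theory Num.Theory.
Import numFieldNormedType.Exports.
Local Open Scope classical_set_scope.
Local Open Scope ring_scope.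

Section OPFV.
Variables (R : realType) (dX : measure_display) (X : measurableType dX)
  (A : finType).

(* A sample (x, t, a, r) is encoded as ((x, t), a), r). *)
Definition sample := (X * R * A * R)%type.

Definition indphi (L : eqType) (phi : R -> L) (t t' : R) : R :=
  (phi t == phi t')%:R.

Definition Et (pt : R -> R) (T : R) (g : R -> R) : R :=
  \int[lebesgue_measure]_(t in `[0, T]) (pt t * g t).
Definition Vt pt T (g : R -> R) : R := Et pt T (fun t => (g t - Et pt T g) ^+ 2).

Definition pphi (L : eqType) pt T (phi : R -> L) (t' : R) : R :=
  Et pt T (fun s => indphi phi s t').

Definition Ex (px : probability X R) (g : X -> R) : R := \int[px]_x g x.
Definition Vx px (g : X -> R) : R := Ex px (fun x => (g x - Ex px g) ^+ 2).

Definition Epol (pol : X -> R -> A -> R) x t (h : A -> R) : R :=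
  \sum_a pol x t a * h a.
Definition Vpol pol x t (h : A -> R) : R :=
  Epol pol x t (fun a => (h a - Epol pol x t h) ^+ 2).

(* reward distributions p(r | x, t, a), for every real t, as probability kernels *)
Definition Er (Pr : A -> R.-pker (X * R)%type ~> R) a x t (h : R -> R) : R :=
  \int[Pr a (x, t)]_r h r.
Definition qmean Pr x t a : R := Er Pr a x t id.
Definition sigma2 Pr x t a : R := Er Pr a x t (fun r => (r - qmean Pr x t a) ^+ 2).

Definition E1 px pt T pi0 Pr (g : sample -> R) : R :=
  Ex px (fun x => Et pt T (fun t => Epol pi0 x t (fun a =>
    Er Pr a x t (fun r => g (x, t, a, r))))).

Definition E1e (px : probability X R) (pt : R -> R) (T : R) (pi0 : X -> R -> A -> R)
    (Pr : A -> R.-pker (X * R)%type ~> R) (g : sample -> \bar R) : \bar R :=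
  (\int[px]_x \int[lebesgue_measure]_(t in `[0%R, T])
     ((pt t)%:E * \sum_a ((pi0 x t a)%:E * \int[Pr a (x, t)]_r g (x, t, a, r))))%E.

Fixpoint ED px pt T pi0 Pr (k : nat) (h : seq sample -> R) : R :=
  match k with
  | 0 => h [::]
  | k'.+1 => E1 px pt T pi0 Pr (fun s => ED px pt T pi0 Pr k' (fun D => h (s :: D)))
  end.
Definition VD px pt T pi0 Pr k (h : seq sample -> R) : R :=
  ED px pt T pi0 Pr k (fun D => (h D - ED px pt T pi0 Pr k h) ^+ 2).

Definition score (d : nat) (pi : 'rV[R]_d -> X -> R -> A -> R) (zeta : 'rV[R]_d)
    (j : 'I_d) x t a : R :=
  derive (fun z => ln (pi z x t a)) zeta (delta_mx 0 j).

Definition opfv_term (L : eqType) pt T (phi : R -> L) (t' : R) d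
    (pi : 'rV[R]_d -> X -> R -> A -> R) zeta j (pi0 : X -> R -> A -> R)
    (fhat : X -> R -> A -> R) (s : sample) : R :=
  let: (x, t, a, r) := s in
  indphi phi t t' / pphi pt T phi t' * (pi zeta x t' a / pi0 x t a)
    * (r - fhat x t a) * score pi zeta j x t' a
  + Epol (pi zeta) x t' (fun b => fhat x t' b * score pi zeta j x t' b).

Definition opfv_grad (L : eqType) pt T (phi : R -> L) t' d pi zeta j pi0 fhat
    (D : seq sample) : R :=
  (size D)%:R^-1 * \sum_(s <- D) @opfv_term L pt T phi t' d pi zeta j pi0 fhat s.

End OPFV.

(* Main.v *)
Require Import Defs.
From HB Require Import structures.
From mathcomp Require Import all_boot all_order all_algebra.
From mathcomp Require Import all_classical all_reals all_analysis.
Import Order.TTheory GRing.Theory Num.Theory.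
Import numFieldNormedType.Exports.
From mathcomp Require Import measurable_realfun.
From mathcomp Require Import ring lra.
Local Open Scope classical_set_scope.
Local Open Scope ring_scope.


Set Implicit Arguments. Unset Strict Implicit. Unset Printing Implicit Defensive.


Lemma measurable_inv (R : realType) : measurable_fun [set: R] (@GRing.inv R).
Proof.
have -> : [set: R] = [set~ 0] `|` [set 0].
  apply/seteqP; split=> x // _ /=.
  by have [->|/eqP] := eqVneq x 0; [right|left].
apply/measurable_funU => //; first exact: measurableC.
split.
  apply: measurable_realfun.open_continuous_measurable_fun.
    by rewrite openC; apply: accessible_closed_set1; exact: hausdorff_accessible.

  by move=> x /set_mem /eqP x0; exact: inv_continuous.
move=> _ B mB; rewrite (_ : _ `&` _ = if (0:R)^-1 \in B then [set 0] else set0).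
  by case: ifP.
apply/seteqP; split=> x /=.
  by case=> -> h; rewrite mem_set.
by case: ifPn => // /set_mem h ->.
Qed.

Section intR.
Context d (T : measurableType d) (R : realType) (mu : {measure set T -> \bar R}).
Variable (D : set T).
Hypothesis mD : measurable D.

Lemma intRD (f g : T -> R) : mu.-integrable D (EFin \o f) ->
  mu.-integrable D (EFin \o g) -> mu.-integrable D (EFin \o (fun x => f x + g x)).
Proof.
move=> hf hg; by apply: eq_integrable (integrableD mD hf hg) => //= x _.
Qed.

Lemma intRZ (c : R) (f : T -> R) : mu.-integrable D (EFin \o f) ->
  mu.-integrable D (EFin \o (fun x => c * f x)).
Proof.
move=> hf; by apply: eq_integrable (integrableZl mD c hf) => //= x _.
Qed.

Lemma intRB (f g : T -> R) : mu.-integrable D (EFin \o f) ->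
  mu.-integrable D (EFin \o g) -> mu.-integrable D (EFin \o (fun x => f x - g x)).
Proof.
move=> hf hg; by apply: eq_integrable (integrableB mD hf hg) => //= x _.
Qed.

Lemma intR_ext (f g : T -> R) : (forall x, D x -> f x = g x) ->
  mu.-integrable D (EFin \o f) -> mu.-integrable D (EFin \o g).
Proof.
move=> fg; apply: eq_integrable => //= x /set_mem Dx; by rewrite fg.
Qed.

End intR.

Section ErPoly.
Variables (R : realType) (mu : {measure set R -> \bar R}) (rmax : R).
Hypotheses (mu1 : mu setT = 1%E) (mu01 : mu `[0, rmax]%classic = 1%E).

Lemma mu_compl0 : mu (~` `[0, rmax]%classic) = 0%E.
Proof.
have : (1 + mu (~` `[0%R, rmax]%classic) = 1 + 0)%E.
  rewrite adde0 -{1}mu01 -measureU //; last exact: setICr.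
    by rewrite setUCr; exact: mu1.
  exact: measurableC.
case: (mu (~` `[0%R, rmax]%classic)) => [r||] //=.
by rewrite -!EFinD => -[] /addrI ->.
Qed.

Lemma int_pow (k : nat) : mu.-integrable setT (EFin \o (fun r : R => r ^+ k)).
Proof.
apply/(negligible_integrable (measurableC (measurable_itv `[0, rmax]))) => //.
- by apply/measurable_EFinP/measurable_funX.
- exact: mu_compl0.
rewrite setTD setCK; apply: measurable_bounded_integrable => //.
- by rewrite mu01 ltry.
exists (`|rmax| ^+ k); split; first by rewrite realE exprn_ge0 ?orbT.
move=> M hM x /=; rewrite in_itv /= => /andP[x0 xr].
rewrite normrX (le_trans _ (ltW hM))//; apply: lerXn2r => //.
by rewrite !ger0_norm// (le_trans x0 xr).
Qed.

Lemma Er_poly (c0 c1 c2 : R) :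
  \int[mu]_r (c0 + c1 * r + c2 * r ^+ 2) =
  c0 + c1 * \int[mu]_r r + c2 * \int[mu]_r (r ^+ 2).
Proof.
have i0 := int_pow 0; have i1 := int_pow 1; have i2 := int_pow 2.
have i1' : mu.-integrable setT (EFin \o (fun r : R => r)).
  by apply: (intR_ext measurableT _ i1) => //= x _; rewrite expr1.
rewrite RintegralD //; last exact: intRZ.
  rewrite RintegralD //; last exact: intRZ.
    rewrite Rintegral_cst // mu1 /= mulr1 RintegralZl // RintegralZl //.
  by apply: (intR_ext measurableT _ (intRZ measurableT c0 i0)) => //= x _; rewrite expr0 mulr1.
apply: intRD => //; last exact: intRZ.
by apply: (intR_ext measurableT _ (intRZ measurableT c0 i0)) => //= x _; rewrite expr0 mulr1.
Qed.

End ErPoly.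



Lemma meas_kernel_Rint d d' (X : measurableType d) (Y : measurableType d')
  (R : realType) (k : R.-ker X ~> Y) (f : Y -> R) :
  measurable_fun setT f -> measurable_fun setT (fun x => \int[k x]_y f y).
Proof.
move=> mf; rewrite /Rintegral.
apply: measurableT_comp; first exact: fine_measurable.
under eq_fun do rewrite integralE.
have mf' : measurable_fun setT (EFin \o f) by exact/measurable_EFinP.
apply: emeasurable_funB.
  apply: measurable_fun_integral_kernel => //; first exact: measurable_kernel.
  exact: measurable_funepos.
apply: measurable_fun_integral_kernel => //; first exact: measurable_kernel.
exact: measurable_funeneg.
Qed.

Lemma meas_Rint_param d (X : measurableType d) (R : realType)
  (F : X -> R -> R) (D : set R) : measurable D ->
  measurable_fun setT (fun xt : X * R => F xt.1 xt.2) ->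
  measurable_fun setT (fun x => \int[lebesgue_measure]_(t in D) F x t).
Proof.
move=> mD mF; rewrite /Rintegral.
apply: measurableT_comp; first exact: fine_measurable.
under eq_fun do rewrite integralE.
set h := (fun xt : X * R => (F xt.1 xt.2)%:E).
have mh : measurable_fun setT h by exact/measurable_EFinP.
have mI : measurable_fun setT (fun xt : X * R => ((\1_D xt.2)%:E : \bar R)).
  apply/measurable_EFinP.
  exact: (measurableT_comp (measurable_indic mD) measurable_snd).
apply: emeasurable_funB.
  rewrite (_ : (fun x => _) = fubini_F lebesgue_measure
     (fun xt => (h^\+ xt * (\1_D xt.2)%:E)%E)); last first.
    apply/funext => x; rewrite integral_mkcond epatch_indic /fubini_F.
    by apply: eq_integral => t _ /=; rewrite !funeposE.
  apply: measurable_fun_fubini_tonelli_F.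
    by apply: emeasurable_funM => //; exact: measurable_funepos.
  by move=> xt; apply: mule_ge0 => //; rewrite lee_fin.
rewrite (_ : (fun x => _) = fubini_F lebesgue_measure
   (fun xt => (h^\- xt * (\1_D xt.2)%:E)%E)); last first.
  apply/funext => x; rewrite integral_mkcond epatch_indic /fubini_F.
  by apply: eq_integral => t _ /=; rewrite !funenegE.
apply: measurable_fun_fubini_tonelli_F.
  by apply: emeasurable_funM => //; exact: measurable_funeneg.
by move=> xt; apply: mule_ge0 => //; rewrite lee_fin.
Qed.

Section sumlem.
Variables (A : finType) (R : comRingType) (p z e : A -> R).

Lemma sum_poly (c0 c1 c2 c3 : R) :
  \sum_a p a * (c0 + c1 * z a + c2 * z a ^+ 2 + c3 * e a) =
  c0 * \sum_a p a + c1 * \sum_a p a * z a + c2 * \sum_a p a * z a ^+ 2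
  + c3 * \sum_a p a * e a.
Proof.
rewrite !mulr_sumr -!big_split /=; apply: eq_bigr => a _; ring.
Qed.

Lemma sumlem (al be ga w g : R) : \sum_a p a = 1 ->
  let H := \sum_a p a * z a in
  \sum_a p a * (al + be * (w * z a + g) + ga * ((w * z a + g) ^+ 2 + e a))
  = al + be * (w * H + g) + ga * (\sum_a p a * e a
      + w ^+ 2 * \sum_a p a * (z a - H) ^+ 2 + (w * H + g) ^+ 2).
Proof.
move=> p1 H.
rewrite (eq_bigr (fun a => p a * ((al + be * g + ga * g ^+ 2)
   + (be * w + ga * 2 * w * g) * z a + (ga * w ^+ 2) * z a ^+ 2 + ga * e a)));
  last by move=> a _; ring.
rewrite sum_poly.
rewrite [X in w ^+ 2 * X](eq_bigr (fun a => p a * (H ^+ 2 + (- 2 * H) * z a + 1 * z a ^+ 2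
   + 0 * e a))); last by move=> a _; ring.
rewrite sum_poly p1 -/H; rewrite -/H. ring.
Qed.
End sumlem.

Lemma meas_eint_param d (X : measurableType d) (R : realType)
  (F : X -> R -> R) (D : set R) : measurable D ->
  measurable_fun setT (fun xt : X * R => F xt.1 xt.2) ->
  (forall x t, 0 <= F x t) ->
  measurable_fun setT (fun x => (\int[lebesgue_measure]_(t in D) (F x t)%:E)%E).
Proof.
move=> mD mF F0.
have mI : measurable_fun setT (fun xt : X * R => ((\1_D xt.2)%:E : \bar R)).
  apply/measurable_EFinP.
  exact: (measurableT_comp (measurable_indic mD) measurable_snd).
rewrite (_ : (fun x => _) = fubini_F lebesgue_measure
   (fun xt => ((F xt.1 xt.2)%:E * (\1_D xt.2)%:E)%E)); last first.
  apply/funext => x; rewrite integral_mkcond epatch_indic /fubini_F.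
  by apply: eq_integral => t _.
apply: measurable_fun_fubini_tonelli_F.
  by apply: emeasurable_funM => //; exact/measurable_EFinP.
by move=> xt; apply: mule_ge0 => //; rewrite lee_fin.
Qed.



Section Main.
Variables (R : realType) (dX : measure_display) (X : measurableType dX)
  (A : finType) (L : eqType) (d : nat) (j : 'I_d)
  (px : probability X R) (T : R) (pt : R -> R) (t' : R) (phi : R -> L)
  (pi0 : X -> R -> A -> R) (pi : 'rV[R]_d -> X -> R -> A -> R) (zeta : 'rV[R]_d)
  (Pr : A -> R.-pker (X * R)%type ~> R) (rmax : R) (fhat : X -> R -> A -> R).

Hypothesis Hr : forall a x t, Pr a (x, t) `[0, rmax]%classic = 1%E.
Hypothesis mpt : measurable_fun setT pt.
Hypothesis pt0 : forall t, 0 <= pt t.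
Hypothesis pt1 : (\int[lebesgue_measure]_(t in `[0%R, T]%classic) (pt t)%:E = 1)%E.
Hypothesis mphi : measurable [set s : R | phi s = phi t'].
Hypothesis pi00 : forall x t a, 0 <= pi0 x t a.
Hypothesis pi0sum : forall x t, \sum_a pi0 x t a = 1.
Hypothesis mpi0 : forall a, measurable_fun setT (fun xt : X * R => pi0 xt.1 xt.2 a).
Hypothesis mpi : forall a, measurable_fun setT (fun x => pi zeta x t' a).
Hypothesis ms : forall a, measurable_fun setT (fun x => score pi zeta j x t' a).
Hypothesis mf : forall a, measurable_fun setT (fun xt : X * R => fhat xt.1 xt.2 a).
Hypothesis mf' : forall a, measurable_fun setT (fun x => fhat x t' a).
Hypothesis pi0pos : forall x t a, 0 <= t <= T -> 0 < pi0 x t a.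
Hypothesis pphi0 : 0 < pphi pt T phi t'.
Hypothesis Hdelta : forall x a t, 0 <= t <= T -> indphi phi t t' = 1 ->
     qmean Pr x t a - qmean Pr x t' a = fhat x t a - fhat x t' a.

Definition w t := indphi phi t t' / pphi pt T phi t'.
Definition sc := score pi zeta j.
Definition q := qmean Pr.
Definition m2 x t a := Er Pr a x t (fun r => r ^+ 2).
Definition Y := opfv_term pt T phi t' pi zeta j pi0 fhat.
Definition gg x := Epol (pi zeta) x t' (fun b => fhat x t' b * sc x t' b).
Definition hh x := Epol (pi zeta) x t' (fun a => (q x t' a - fhat x t' a) * sc x t' a).
Definition uu x := Epol (pi zeta) x t' (fun a => q x t' a * sc x t' a).
Definition V1 x t := Epol pi0 x t (fun a =>
        (w t * (pi zeta x t' a / pi0 x t a) * sc x t' a) ^+ 2 * sigma2 Pr x t a).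
Definition zz x t a := pi zeta x t' a / pi0 x t a * (q x t' a - fhat x t' a) * sc x t' a.
Definition V2 x t := w t ^+ 2 * Vpol pi0 x t (zz x t).
Definition vv := Vt pt T w.
Definition Expr (al be ga : R) x t :=
  al + be * (w t * hh x + gg x) + ga * (V1 x t + V2 x t + (w t * hh x + gg x) ^+ 2).
Definition I0T := `[0%R, T]%classic.

Lemma mI0T : measurable (I0T : set (measurableTypeR R)).
Proof. exact: measurable_itv. Qed.

Lemma I0TP t : I0T t <-> 0 <= t <= T.
Proof. by rewrite /I0T /= in_itv. Qed.

Lemma indphiE t : indphi phi t t' = \1_[set s | phi s = phi t'] t.
Proof.
rewrite /indphi indicE; case: (eqVneq (phi t) (phi t')) => h.
  by rewrite mem_set.
by rewrite memNset //= => /eqP; rewrite (negbTE h).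
Qed.

Lemma indphi01 t : indphi phi t t' = 0 \/ indphi phi t t' = 1.
Proof. by rewrite /indphi; case: (_ == _); [right|left]. Qed.

Lemma mw : measurable_fun setT w.
Proof.
rewrite /w; apply: measurable_funM => //.
rewrite (_ : (fun t => _) = \1_[set s | phi s = phi t']).
  exact: measurable_indic.
by apply/funext => t; rewrite indphiE.
Qed.

Lemma w_ge0 t : 0 <= w t.
Proof. by rewrite /w /indphi divr_ge0 // ltW. Qed.

Lemma w2 t : w t ^+ 2 = w t * (pphi pt T phi t')^-1.
Proof. rewrite /w; case: (indphi01 t) => ->; rewrite ?mul0r ?mul1r; ring. Qed.

Lemma Er_polyP a x t (c0 c1 c2 : R) :
  Er Pr a x t (fun r => c0 + c1 * r + c2 * r ^+ 2) = c0 + c1 * q x t a + c2 * m2 x t a.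
Proof.
by rewrite /Er (Er_poly (prob_kernel _) (Hr a x t)).
Qed.

Lemma sigma2E x t a : sigma2 Pr x t a = m2 x t a - q x t a ^+ 2.
Proof.
rewrite /sigma2 -/(q x t a).
rewrite (_ : (fun r => _) = (fun r => q x t a ^+ 2 + (- 2 * q x t a) * r + 1 * r ^+ 2)).
  by rewrite Er_polyP; ring.
by apply/funext => r; ring.
Qed.

Lemma sigma2_ge0 x t a : 0 <= sigma2 Pr x t a.
Proof. by apply: Rintegral_ge0 => r _; exact: sqr_ge0. Qed.

Lemma mq a : measurable_fun setT (fun xt : X * R => q xt.1 xt.2 a).
Proof.
rewrite (_ : (fun xt => _) = (fun xt => \int[Pr a xt]_r r)).
  exact: meas_kernel_Rint.
by apply/funext => -[x t].
Qed.

Lemma mm2 a : measurable_fun setT (fun xt : X * R => m2 xt.1 xt.2 a).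
Proof.
rewrite (_ : (fun xt => _) = (fun xt => \int[Pr a xt]_r (r ^+ 2))).
  by apply: meas_kernel_Rint; exact: measurable_funX.
by apply/funext => -[x t].
Qed.

Lemma msig a : measurable_fun setT (fun xt : X * R => sigma2 Pr xt.1 xt.2 a).
Proof.
rewrite (_ : (fun xt => _) = (fun xt => m2 xt.1 xt.2 a - q xt.1 xt.2 a ^+ 2)).
  apply: measurable_funB; first exact: mm2.
  by apply: measurable_funX; exact: mq.
by apply/funext => -[x t]; rewrite sigma2E.
Qed.

Lemma mq' a : measurable_fun setT (fun x => q x t' a).
Proof. exact: (measurable_fun_pair1 t' (mq a)). Qed.


Lemma mfst (f : X -> R) : measurable_fun setT f ->
  measurable_fun setT (fun xt : X * R => f xt.1).
Proof. by move=> h; exact: (measurableT_comp h measurable_fst). Qed.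

Lemma msnd (f : R -> R) : measurable_fun setT f ->
  measurable_fun setT (fun xt : X * R => f xt.2).
Proof. by move=> h; exact: (measurableT_comp h measurable_snd). Qed.

Lemma msc a : measurable_fun setT (fun x => sc x t' a).
Proof. exact: ms. Qed.

Lemma mgg : measurable_fun setT gg.
Proof.
rewrite /gg /Epol; apply: measurable_sum => a.
by apply: measurable_funM => //; apply: measurable_funM => //; exact: msc.
Qed.

Lemma mhh : measurable_fun setT hh.
Proof.
rewrite /hh /Epol; apply: measurable_sum => a.
apply: measurable_funM => //; apply: measurable_funM => //.
by apply: measurable_funB => //; exact: mq'.
Qed.

Lemma muu : measurable_fun setT uu.
Proof.
rewrite /uu /Epol; apply: measurable_sum => a.
apply: measurable_funM => //; apply: measurable_funM => //; try exact: msc.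
exact: mq'.
Qed.

Lemma uuE x : uu x = hh x + gg x.
Proof.
rewrite /uu /hh /gg /Epol -big_split /=; apply: eq_bigr => a _; ring.
Qed.

Lemma mrho a : measurable_fun setT (fun xt : X * R => pi zeta xt.1 t' a / pi0 xt.1 xt.2 a).
Proof.
apply: measurable_funM; first exact: (mfst (mpi a)).
exact: (measurableT_comp (@measurable_inv R) (mpi0 a)).
Qed.

Lemma mV1 : measurable_fun setT (fun xt : X * R => V1 xt.1 xt.2).
Proof.
rewrite /V1 /Epol; apply: measurable_sum => a.
apply: measurable_funM; first exact: mpi0.
apply: measurable_funM; last exact: msig.
apply: measurable_funX; apply: measurable_funM; last exact: (mfst (msc a)).
apply: measurable_funM; last exact: mrho.
exact: (msnd mw).
Qed.

Lemma mzz a : measurable_fun setT (fun xt : X * R => zz xt.1 xt.2 a).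
Proof.
rewrite /zz; apply: measurable_funM; last exact: (mfst (msc a)).
apply: measurable_funM; first exact: mrho.
have h : measurable_fun setT (fun x => q x t' a - fhat x t' a).
  by apply: measurable_funB => //; exact: mq'.
exact: (mfst h).
Qed.

Lemma mV2 : measurable_fun setT (fun xt : X * R => V2 xt.1 xt.2).
Proof.
rewrite /V2 /Vpol /Epol; apply: measurable_funM.
  by apply: measurable_funX; exact: (msnd mw).
apply: measurable_sum => a.
apply: measurable_funM; first exact: mpi0.
apply: measurable_funX; apply: measurable_funB; first exact: mzz.
apply: measurable_sum => b.
apply: measurable_funM; first exact: mpi0.
exact: mzz.
Qed.

Lemma mExpr al be ga : measurable_fun setT (fun xt : X * R => Expr al be ga xt.1 xt.2).
Proof.
have mwhg : measurable_fun setT (fun xt : X * R => w xt.2 * hh xt.1 + gg xt.1).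
  apply: measurable_funD; last exact: (mfst mgg).
  apply: measurable_funM; [exact: (msnd mw)|exact: (mfst mhh)].
rewrite /Expr; apply: measurable_funD.
  apply: measurable_funD => //; apply: measurable_funM => //.
apply: measurable_funM => //.
apply: measurable_funD; last exact: measurable_funX.
apply: measurable_funD; [exact: mV1|exact: mV2].
Qed.

Lemma V1_ge0 x t : 0 <= V1 x t.
Proof.
rewrite /V1 /Epol; apply: sumr_ge0 => a _; apply: mulr_ge0 => //.
by apply: mulr_ge0; [exact: sqr_ge0|exact: sigma2_ge0].
Qed.

Lemma V2_ge0 x t : 0 <= V2 x t.
Proof.
rewrite /V2 /Vpol /Epol; apply: mulr_ge0; first exact: sqr_ge0.
by apply: sumr_ge0 => a _; apply: mulr_ge0 => //; exact: sqr_ge0.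
Qed.

Lemma Kz x t a : I0T t ->
  w t * (pi zeta x t' a / pi0 x t a) * sc x t' a * (q x t a - fhat x t a) =
  w t * zz x t a.
Proof.
move=> /I0TP tI; rewrite /zz /w.
case: (indphi01 t) => h; rewrite h; first by rewrite !mul0r.
have hd := Hdelta x a tI h.
have -> : q x t a - fhat x t a = q x t' a - fhat x t' a.
  have e : q x t a - fhat x t a - (q x t' a - fhat x t' a) = 0.
    rewrite (_ : _ - _ = (q x t a - q x t' a) - (fhat x t a - fhat x t' a)); last by ring.
    by rewrite /q hd subrr.
  by apply/eqP; rewrite -subr_eq0 e.
ring.
Qed.

Lemma P_ID x t al be ga : I0T t ->
  Epol pi0 x t (fun a => Er Pr a x t
     (fun r => al + be * Y (x, t, a, r) + ga * Y (x, t, a, r) ^+ 2))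
  = Expr al be ga x t.
Proof.
move=> tI.
pose e a := (w t * (pi zeta x t' a / pi0 x t a) * sc x t' a) ^+ 2 * sigma2 Pr x t a.
have step : forall a, Er Pr a x t
     (fun r => al + be * Y (x, t, a, r) + ga * Y (x, t, a, r) ^+ 2)
   = al + be * (w t * zz x t a + gg x) + ga * ((w t * zz x t a + gg x) ^+ 2 + e a).
  move=> a; rewrite -(Kz x a tI) /e.
  set K := w t * (pi zeta x t' a / pi0 x t a) * sc x t' a.
  set B0 := gg x - K * fhat x t a.
  rewrite (_ : (fun r => _) = (fun r => (al + be * B0 + ga * B0 ^+ 2)
     + (be * K + 2 * ga * K * B0) * r + (ga * K ^+ 2) * r ^+ 2)); last first.
    apply/funext => r; rewrite /Y /opfv_term /= /B0 /K /w /gg /sc; ring.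
  rewrite Er_polyP sigma2E /B0; ring.
rewrite /Epol (eq_bigr _ (fun a _ => congr1 (fun v => pi0 x t a * v) (step a))).
rewrite sumlem //.
have HH : \sum_a pi0 x t a * zz x t a = hh x.
  rewrite /hh /Epol; apply: eq_bigr => a _; rewrite /zz.
  have p0 : pi0 x t a != 0 by rewrite gt_eqF // pi0pos //; exact/I0TP.
  by field.
rewrite /Expr /V1 /V2 /Vpol /Epol HH.
done.
Qed.


Definition EI (F : R -> R) :=
  lebesgue_measure.-integrable I0T (EFin \o (fun t => pt t * F t)).

Lemma Et_ext F G : (forall t, I0T t -> F t = G t) -> Et pt T F = Et pt T G.
Proof. by move=> h; rewrite /Et; apply: eq_Rintegral => t /set_mem tI; rewrite h. Qed.

Lemma EI_ext F G : (forall t, I0T t -> F t = G t) -> EI F -> EI G.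
Proof. by rewrite /EI => h hF; apply: (intR_ext mI0T _ hF) => t tI /=; rewrite h. Qed.

Lemma EI_D F G : EI F -> EI G -> EI (fun t => F t + G t).
Proof.
rewrite /EI => hF hG; apply: (intR_ext mI0T _ (intRD mI0T hF hG)) => t _ /=; ring.
Qed.

Lemma EI_Z c F : EI F -> EI (fun t => c * F t).
Proof.
rewrite /EI => hF; apply: (intR_ext mI0T _ (intRZ mI0T c hF)) => t _ /=; ring.
Qed.

Lemma Et_D F G : EI F -> EI G -> Et pt T (fun t => F t + G t) = Et pt T F + Et pt T G.
Proof.
move=> hF hG; rewrite /Et.
transitivity (\int[lebesgue_measure]_(t in I0T) (pt t * F t + pt t * G t)).
  by apply: eq_Rintegral => t _; ring.
exact: (RintegralD mI0T hF hG).
Qed.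

Lemma Et_Z c F : EI F -> Et pt T (fun t => c * F t) = c * Et pt T F.
Proof.
move=> hF; rewrite /Et.
transitivity (\int[lebesgue_measure]_(t in I0T) (c * (pt t * F t))).
  by apply: eq_Rintegral => t _; ring.
exact: (RintegralZl _ mI0T hF).
Qed.

Lemma mptI : measurable_fun I0T pt.
Proof. exact: measurable_funTS. Qed.

Lemma EI1 : EI (fun _ => 1).
Proof.
apply/integrableP; split.
  apply/measurable_EFinP; apply: measurable_funM => //; exact: mptI.
have -> : (\int[lebesgue_measure]_(x in I0T) `|(EFin \o (fun t : R => (pt t * 1)%R)) x| = 1)%E.
  by rewrite -pt1; apply: eq_integral => t _ /=; rewrite mulr1 ger0_norm.
exact: ltry.
Qed.

Lemma Et1 : Et pt T (fun _ => 1) = 1.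
Proof.
rewrite /Et /Rintegral.
have -> : (\int[lebesgue_measure]_(x in I0T) (pt x * 1)%:E = 1)%E.
  rewrite -pt1; apply: eq_integral => t _ /=; by rewrite mulr1.
by [].
Qed.

Lemma w_le t : w t <= (pphi pt T phi t')^-1.
Proof.
rewrite /w; case: (indphi01 t) => ->; rewrite ?mul0r ?mul1r //.
by rewrite invr_ge0 ltW.
Qed.

Lemma EIw k : EI (fun t => w t ^+ k).
Proof.
apply: (le_integrable mI0T _ _ (EI_Z ((pphi pt T phi t')^-1 ^+ k) EI1)).
  apply/measurable_EFinP; apply: measurable_funM; first exact: mptI.
  by apply: measurable_funX; apply: measurable_funTS; exact: mw.
move=> t _ /=; rewrite lee_fin mulr1 !normrM ler_wpM2l // !normrX.
have c0 : 0 <= (pphi pt T phi t')^-1 by rewrite invr_ge0 ltW.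
apply: lerXn2r; rewrite ?nnegrE //.
by rewrite !ger0_norm ?w_le ?w_ge0.
Qed.

Lemma Etw : Et pt T w = 1.
Proof.
have hp : pphi pt T phi t' != 0 by rewrite gt_eqF.
have : pphi pt T phi t' = pphi pt T phi t' * Et pt T w.
  rewrite -Et_Z; last by apply: (EI_ext _ (EIw 1)) => t _; rewrite expr1.
  rewrite [in LHS]/pphi; apply: Et_ext => t _; rewrite /w; by field.
by move/(congr1 (fun v => (pphi pt T phi t')^-1 * v)); rewrite mulrA mulVf // mul1r.
Qed.

Lemma EIw1 : EI w.
Proof. by apply: (EI_ext _ (EIw 1)) => t _; rewrite expr1. Qed.

Lemma Etw2 : Et pt T (fun t => w t ^+ 2) = 1 + vv.
Proof.
have e2 : EI (fun t => -2 * w t + 1) by apply: EI_D; [apply: EI_Z; exact: EIw1|exact: EI1].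
have e : Et pt T (fun t => (w t - 1) ^+ 2) = Et pt T (fun t => w t ^+ 2) - 1.
  rewrite (Et_ext (F := fun t => (w t - 1) ^+ 2)
     (G := fun t => w t ^+ 2 + ((-2) * w t + 1))); last by move=> t _; ring.
  rewrite Et_D //; last exact: EIw.
  rewrite Et_D; [|apply: EI_Z; exact: EIw1|exact: EI1].
  rewrite (Et_Z _ EIw1) Etw Et1; ring.
rewrite /vv /Vt Etw e; ring.
Qed.


Lemma Et_Expr x al be ga : EI (V1 x) -> EI (V2 x) ->
  Et pt T (Expr al be ga x) = al + be * uu x
    + ga * (Et pt T (V1 x) + Et pt T (V2 x) + vv * hh x ^+ 2 + uu x ^+ 2).
Proof.
move=> h1 h2.
set h := hh x; set g := gg x.
pose c0 := al + be * g + ga * g ^+ 2.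
pose c1 := be * h + 2 * ga * h * g.
pose c2 := ga * h ^+ 2.
rewrite (Et_ext (F := Expr al be ga x) (G := fun t =>
   (c0 * 1 + (c1 * w t + c2 * w t ^+ 2)) + (ga * V1 x t + ga * V2 x t))); last first.
  by move=> t _; rewrite /Expr /c0 /c1 /c2 -/h -/g; ring.
have eA : EI (fun t => c0 * 1 + (c1 * w t + c2 * w t ^+ 2)).
  apply: EI_D; first exact: (EI_Z _ EI1).
  by apply: EI_D; [exact: (EI_Z _ EIw1)|exact: (EI_Z _ (EIw 2))].
have eB : EI (fun t => ga * V1 x t + ga * V2 x t).
  by apply: EI_D; [exact: (EI_Z _ h1)|exact: (EI_Z _ h2)].
rewrite Et_D // Et_D; [|exact: (EI_Z _ EI1)|].
  rewrite (Et_Z _ EI1) Et1 Et_D; [|exact: (EI_Z _ EIw1)|exact: (EI_Z _ (EIw 2))].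
  rewrite (Et_Z _ EIw1) (Et_Z _ (EIw 2)) Etw Etw2.
  rewrite Et_D; [|exact: (EI_Z _ h1)|exact: (EI_Z _ h2)].
  rewrite (Et_Z _ h1) (Et_Z _ h2) uuE /c0 /c1 /c2 -/h -/g; ring.
by apply: EI_D; [exact: (EI_Z _ EIw1)|exact: (EI_Z _ (EIw 2))].
Qed.

Lemma Ylin x t a r :
  Y (x, t, a, r) = (gg x - w t * (pi zeta x t' a / pi0 x t a) * sc x t' a * fhat x t a)
     + (w t * (pi zeta x t' a / pi0 x t a) * sc x t' a) * r.
Proof. rewrite /Y /opfv_term /= /w /gg /sc; ring. Qed.

Lemma int_poly2 a x t (c0 c1 c2 : R) :
  (Pr a (x, t)).-integrable setT (EFin \o (fun r => c0 + c1 * r + c2 * r ^+ 2)).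
Proof.
have mu1 := prob_kernel (s := Pr a) (x, t).
have i0 := int_pow mu1 (Hr a x t) 0; have i1 := int_pow mu1 (Hr a x t) 1.
have i2 := int_pow mu1 (Hr a x t) 2.
apply: intRD => //; last exact: intRZ.
apply: intRD => //.
  by apply: (intR_ext measurableT _ (intRZ measurableT c0 i0)) => //= r _; rewrite expr0 mulr1.
by apply: (intR_ext measurableT _ (intRZ measurableT c1 i1)) => //= r _; rewrite expr1.
Qed.

Lemma intY2 x t a : (Pr a (x, t)).-integrable setT (EFin \o (fun r => Y (x, t, a, r) ^+ 2)).
Proof.
set K := w t * (pi zeta x t' a / pi0 x t a) * sc x t' a.
set B := gg x - K * fhat x t a.
apply: (intR_ext measurableT _ (int_poly2 a x t (B ^+ 2) (2 * B * K) (K ^+ 2))).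
by move=> r _; rewrite /B /K /w /gg /sc /=; ring.
Qed.

Lemma P_ID2 x t : I0T t ->
  Epol pi0 x t (fun a => Er Pr a x t (fun r => Y (x, t, a, r) ^+ 2)) = Expr 0 0 1 x t.
Proof.
move=> tI; rewrite -(P_ID x 0 0 1 tI); congr Epol; apply/funext => a.
by congr Er; apply/funext => r; ring.
Qed.

Lemma Expr001 x t : Expr 0 0 1 x t = V1 x t + V2 x t + (w t * hh x + gg x) ^+ 2.
Proof. rewrite /Expr; ring. Qed.

Definition T1e x := (\int[lebesgue_measure]_(t in I0T) (pt t * V1 x t)%:E)%E.
Definition T2e x := (\int[lebesgue_measure]_(t in I0T) (pt t * V2 x t)%:E)%E.
Definition C x := vv * hh x ^+ 2 + uu x ^+ 2.

Lemma mptV1 : measurable_fun setT (fun xt : X * R => pt xt.2 * V1 xt.1 xt.2).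
Proof. apply: measurable_funM; [exact: (msnd mpt)|exact: mV1]. Qed.
Lemma mptV2 : measurable_fun setT (fun xt : X * R => pt xt.2 * V2 xt.1 xt.2).
Proof. apply: measurable_funM; [exact: (msnd mpt)|exact: mV2]. Qed.

Lemma mT1e : measurable_fun setT T1e.
Proof.
apply: (meas_eint_param (F := fun x t => pt t * V1 x t) mI0T mptV1).
by move=> x t; apply: mulr_ge0 => //; exact: V1_ge0.
Qed.
Lemma mT2e : measurable_fun setT T2e.
Proof.
apply: (meas_eint_param (F := fun x t => pt t * V2 x t) mI0T mptV2).
by move=> x t; apply: mulr_ge0 => //; exact: V2_ge0.
Qed.

Lemma EI_V1 x : (T1e x < +oo)%E -> EI (V1 x).
Proof.
move=> h; apply/integrableP; split.
  apply/measurable_EFinP; apply: measurable_funTS.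
  exact: (measurable_fun_pair2 x mptV1).
apply: le_lt_trans h; rewrite le_eqVlt; apply/orP; left; apply/eqP.
apply: eq_integral => t _ /=; rewrite ger0_norm //.
by apply: mulr_ge0 => //; exact: V1_ge0.
Qed.

Lemma EI_V2 x : (T2e x < +oo)%E -> EI (V2 x).
Proof.
move=> h; apply/integrableP; split.
  apply/measurable_EFinP; apply: measurable_funTS.
  exact: (measurable_fun_pair2 x mptV2).
apply: le_lt_trans h; rewrite le_eqVlt; apply/orP; left; apply/eqP.
apply: eq_integral => t _ /=; rewrite ger0_norm //.
by apply: mulr_ge0 => //; exact: V2_ge0.
Qed.


Lemma EI_W x : EI (fun t => (w t * hh x + gg x) ^+ 2).
Proof.
set h := hh x; set g := gg x.
apply: (EI_ext (F := fun t => g ^+ 2 * 1 + (2 * h * g * w t + h ^+ 2 * w t ^+ 2))).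
  by move=> t _; ring.
apply: EI_D; first exact: (EI_Z _ EI1).
by apply: EI_D; [exact: (EI_Z _ EIw1)|exact: (EI_Z _ (EIw 2))].
Qed.

Lemma Et_W x : Et pt T (fun t => (w t * hh x + gg x) ^+ 2) = C x.
Proof.
set h := hh x; set g := gg x.
rewrite (Et_ext (G := fun t => g ^+ 2 * 1 + (2 * h * g * w t + h ^+ 2 * w t ^+ 2))); last first.
  by move=> t _; ring.
rewrite Et_D; [|exact: (EI_Z _ EI1)|].
  rewrite (Et_Z _ EI1) Et1 Et_D; [|exact: (EI_Z _ EIw1)|exact: (EI_Z _ (EIw 2))].
  rewrite (Et_Z _ EIw1) (Et_Z _ (EIw 2)) Etw Etw2 /C uuE -/h -/g; ring.
by apply: EI_D; [exact: (EI_Z _ EIw1)|exact: (EI_Z _ (EIw 2))].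
Qed.

Lemma vv_ge0 : 0 <= vv.
Proof.
rewrite /vv /Vt /Et; apply: Rintegral_ge0 => t _.
by apply: mulr_ge0 => //; exact: sqr_ge0.
Qed.

Lemma C_ge0 x : 0 <= C x.
Proof. by rewrite /C; apply: addr_ge0; [apply: mulr_ge0; [exact: vv_ge0|exact: sqr_ge0]|exact: sqr_ge0]. Qed.

Lemma mC : measurable_fun setT C.
Proof.
rewrite /C; apply: measurable_funD; last by apply: measurable_funX; exact: muu.
by apply: measurable_funM => //; apply: measurable_funX; exact: mhh.
Qed.

Lemma E1e_eq : E1e px pt T pi0 Pr (fun s => (Y s ^+ 2)%:E) =
  (\int[px]_x (T1e x + T2e x + (C x)%:E))%E.
Proof.
rewrite /E1e; apply: eq_integral => x _.
transitivity (\int[lebesgue_measure]_(t in I0T) ((pt t * V1 x t)%:E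
   + (pt t * V2 x t)%:E + (pt t * (w t * hh x + gg x) ^+ 2)%:E))%E.
  apply: eq_integral => t /set_mem tI.
  rewrite (eq_bigr (fun a => (pi0 x t a * Er Pr a x t (fun r => Y (x, t, a, r) ^+ 2))%:E)); last first.
    move=> a _; rewrite /Er /Rintegral EFinM fineK //.
    exact: (integrable_fin_num measurableT (intY2 x t a)).
  rewrite sumEFin -EFinM.
  have := P_ID2 x tI; rewrite /Epol => ->.
  by rewrite Expr001 -!EFinD !mulrDr.
have m1 : measurable_fun I0T (fun t => (pt t * V1 x t)%:E).
  apply/measurable_EFinP; apply: measurable_funTS; exact: (measurable_fun_pair2 x mptV1).
have m2 : measurable_fun I0T (fun t => (pt t * V2 x t)%:E).
  apply/measurable_EFinP; apply: measurable_funTS; exact: (measurable_fun_pair2 x mptV2).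
have m3 : measurable_fun I0T (fun t => (pt t * (w t * hh x + gg x) ^+ 2)%:E).
  by case/integrableP: (EI_W x).
rewrite ge0_integralD //; first last.
- by move=> t _; rewrite lee_fin; apply: mulr_ge0 => //; exact: sqr_ge0.
- exact: emeasurable_funD.
- move=> t _; rewrite lee_fin; apply: addr_ge0; apply: mulr_ge0 => //.
    exact: V1_ge0.
  exact: V2_ge0.
- exact: mI0T.
rewrite ge0_integralD //; first last.
- by move=> t _; rewrite lee_fin; apply: mulr_ge0 => //; exact: V2_ge0.
- by move=> t _; rewrite lee_fin; apply: mulr_ge0 => //; exact: V1_ge0.
- exact: mI0T.
congr (_ + _)%E.
rewrite -Et_W /Et /Rintegral fineK //.
exact: (integrable_fin_num mI0T (EI_W x)).
Qed.


Hypothesis Hfin : (E1e px pt T pi0 Pr (fun s => (Y s ^+ 2)%:E) < +oo)%E.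

Lemma T1e_ge0 x : (0 <= T1e x)%E.
Proof. by apply: integral_ge0 => t _; rewrite lee_fin; apply: mulr_ge0 => //; exact: V1_ge0. Qed.
Lemma T2e_ge0 x : (0 <= T2e x)%E.
Proof. by apply: integral_ge0 => t _; rewrite lee_fin; apply: mulr_ge0 => //; exact: V2_ge0. Qed.

Lemma fin_parts : (\int[px]_x T1e x < +oo)%E /\ (\int[px]_x T2e x < +oo)%E
  /\ (\int[px]_x (C x)%:E < +oo)%E.
Proof.
have := Hfin; rewrite E1e_eq.
have mC' : measurable_fun setT (fun x => (C x)%:E) by exact/measurable_EFinP/mC.
rewrite ge0_integralD //; first last.
- by move=> x _; rewrite lee_fin; exact: C_ge0.
- exact: emeasurable_funD (mT1e) (mT2e).
- by move=> x _; apply: adde_ge0; [exact: T1e_ge0|exact: T2e_ge0].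
rewrite ge0_integralD //; last first.
- exact: mT2e.
- by move=> x _; exact: T2e_ge0.
- exact: mT1e.
- by move=> x _; exact: T1e_ge0.
have i1 : (0 <= \int[px]_x T1e x)%E by apply: integral_ge0 => x _; exact: T1e_ge0.
have i2 : (0 <= \int[px]_x T2e x)%E by apply: integral_ge0 => x _; exact: T2e_ge0.
have i3 : (0 <= \int[px]_x (C x)%:E)%E by apply: integral_ge0 => x _; rewrite lee_fin; exact: C_ge0.
move=> h; split; [|split].
- apply: le_lt_trans h; rewrite -addeA; exact: leeDl (adde_ge0 i2 i3).
- apply: le_lt_trans h; rewrite (addeC (\int[px]_x T1e x)%E) -addeA; exact: leeDl (adde_ge0 i1 i3).
- by apply: le_lt_trans h; exact: leeDr (adde_ge0 i1 i2).
Qed.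

Definition XI (F : X -> R) := px.-integrable setT (EFin \o F).

Lemma XI_C : XI C.
Proof.
apply/integrableP; split; first exact/measurable_EFinP/mC.
case: fin_parts => _ [_ h]; apply: le_lt_trans h; rewrite le_eqVlt; apply/orP; left.
by apply/eqP; apply: eq_integral => x _ /=; rewrite ger0_norm //; exact: C_ge0.
Qed.

Lemma XI_le (F G : X -> R) : measurable_fun setT F -> (forall x, `|F x| <= G x) -> XI G -> XI F.
Proof.
move=> mF h iG; apply: (le_integrable measurableT _ _ iG).
  exact/measurable_EFinP.
move=> x _ /=; rewrite lee_fin (le_trans (h x)) //.
by rewrite (le_trans _ (ler_norm (G x))).
Qed.

Lemma XI_u2 : XI (fun x => uu x ^+ 2).
Proof.
apply: XI_le XI_C; first by apply: measurable_funX; exact: muu.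
move=> x; rewrite ger0_norm ?sqr_ge0 // /C lerDr; apply: mulr_ge0; [exact: vv_ge0|exact: sqr_ge0].
Qed.

Lemma XI_vh2 : XI (fun x => vv * hh x ^+ 2).
Proof.
apply: XI_le XI_C; first by apply: measurable_funM => //; apply: measurable_funX; exact: mhh.
move=> x; rewrite ger0_norm /C ?lerDl ?sqr_ge0 //.
by apply: mulr_ge0; [exact: vv_ge0|exact: sqr_ge0].
Qed.

Lemma XI1 : XI (fun _ => 1).
Proof. exact: finite_measure_integrable_cst. Qed.

Lemma XI_D F G : XI F -> XI G -> XI (fun x => F x + G x).
Proof. exact: intRD. Qed.

Lemma XI_Z c F : XI F -> XI (fun x => c * F x).
Proof. exact: intRZ. Qed.

Lemma XI_u : XI uu.
Proof.
apply: XI_le (XI_D XI1 XI_u2); first exact: muu.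
move=> x; rewrite -real_normK ?num_real //.
set a := `|uu x|; have a0 : 0 <= a by exact: normr_ge0.
nra.
Qed.

Lemma integrable_T1e : px.-integrable setT T1e.
Proof.
apply/integrableP; split; first exact: mT1e.
case: fin_parts => h _; apply: le_lt_trans h; rewrite le_eqVlt; apply/orP; left.
by apply/eqP; apply: eq_integral => x _; rewrite gee0_abs //; exact: T1e_ge0.
Qed.

Lemma integrable_T2e : px.-integrable setT T2e.
Proof.
apply/integrableP; split; first exact: mT2e.
case: fin_parts => _ [h _]; apply: le_lt_trans h; rewrite le_eqVlt; apply/orP; left.
by apply/eqP; apply: eq_integral => x _; rewrite gee0_abs //; exact: T2e_ge0.
Qed.

Lemma mEtV1 : measurable_fun setT (fun x => Et pt T (V1 x)).
Proof. exact: (meas_Rint_param (F := fun x t => pt t * V1 x t) mI0T mptV1). Qed.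
Lemma mEtV2 : measurable_fun setT (fun x => Et pt T (V2 x)).
Proof. exact: (meas_Rint_param (F := fun x t => pt t * V2 x t) mI0T mptV2). Qed.

Lemma XI_V1 : XI (fun x => Et pt T (V1 x)).
Proof.
apply: (le_integrable measurableT _ _ integrable_T1e); first exact/measurable_EFinP/mEtV1.
move=> x _ /=; rewrite gee0_abs ?T1e_ge0 //.
have := T1e_ge0 x; rewrite /Et /Rintegral -/(T1e x).
case: (T1e x) => [r||] r0 //=; first by rewrite lee_fin ger0_norm // -lee_fin.
exact: leey.
Qed.

Lemma XI_V2 : XI (fun x => Et pt T (V2 x)).
Proof.
apply: (le_integrable measurableT _ _ integrable_T2e); first exact/measurable_EFinP/mEtV2.
move=> x _ /=; rewrite gee0_abs ?T2e_ge0 //.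
have := T2e_ge0 x; rewrite /Et /Rintegral -/(T2e x).
case: (T2e x) => [r||] r0 //=; first by rewrite lee_fin ger0_norm // -lee_fin.
exact: leey.
Qed.


Lemma Ex_D F G : XI F -> XI G -> Ex px (fun x => F x + G x) = Ex px F + Ex px G.
Proof. by move=> hF hG; rewrite /Ex; exact: (RintegralD measurableT hF hG). Qed.

Lemma Ex_Z c F : XI F -> Ex px (fun x => c * F x) = c * Ex px F.
Proof. by move=> hF; rewrite /Ex; exact: (RintegralZl _ measurableT hF). Qed.

Lemma Ex1 : Ex px (fun _ => 1) = 1.
Proof.
rewrite /Ex Rintegral_cst //; transitivity (1 * fine (1%E : \bar R)); last by rewrite mul1r.
by congr (_ * fine _); exact: probability_setT.
Qed.

Definition M1 := Ex px uu.
Definition M2 := Ex px (fun x => Et pt T (V1 x)) + Ex px (fun x => Et pt T (V2 x))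
  + Ex px (fun x => vv * hh x ^+ 2) + Ex px (fun x => uu x ^+ 2).

Lemma ae_lt (f : X -> \bar R) : px.-integrable setT f ->
  {ae px, forall x, setT x -> (f x < +oo)%E}.
Proof.
move=> fi; apply: filterS (integrable_ae measurableT fi) => x h /h.
by rewrite fin_numElt => /andP[].
Qed.

Lemma KEY al be ga :
  E1 px pt T pi0 Pr (fun s => al + be * Y s + ga * Y s ^+ 2) = al + be * M1 + ga * M2.
Proof.
rewrite /E1.
transitivity (Ex px (fun x => Et pt T (Expr al be ga x))).
  congr (Ex px _); apply/funext => x; apply: Et_ext => t tI; exact: P_ID.
pose F2 x := al * 1 + be * uu x + ga * (Et pt T (V1 x) + Et pt T (V2 x)
   + vv * hh x ^+ 2 + uu x ^+ 2).
transitivity (Ex px F2).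
  rewrite /Ex /Rintegral; congr fine; apply: ae_eq_integral => //.
  - apply/measurable_EFinP.
    apply: (meas_Rint_param (F := fun x t => pt t * Expr al be ga x t) mI0T).
    by apply: measurable_funM; [exact: (msnd mpt)|exact: mExpr].
  - apply/measurable_EFinP; rewrite /F2.
    apply: measurable_funD; first apply: measurable_funD => //.
    + by apply: measurable_funM => //; exact: muu.
    apply: measurable_funM => //.
    apply: measurable_funD; last by apply: measurable_funX; exact: muu.
    apply: measurable_funD; last by apply: measurable_funM => //; apply: measurable_funX; exact: mhh.
    by apply: measurable_funD; [exact: mEtV1|exact: mEtV2].
  apply: filterS2 (ae_lt integrable_T1e) (ae_lt integrable_T2e) => x h1 h2 _.
  rewrite /= Et_Expr; first by rewrite /F2 mulr1.
    exact: EI_V1 (h1 I).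
  exact: EI_V2 (h2 I).
have iA : XI (fun x => Et pt T (V1 x) + Et pt T (V2 x)) by exact: XI_D XI_V1 XI_V2.
have iB : XI (fun x => Et pt T (V1 x) + Et pt T (V2 x) + vv * hh x ^+ 2) by exact: XI_D iA XI_vh2.
have iC : XI (fun x => Et pt T (V1 x) + Et pt T (V2 x) + vv * hh x ^+ 2 + uu x ^+ 2)
  by exact: XI_D iB XI_u2.
rewrite /F2 Ex_D; [|exact: XI_D (XI_Z _ XI1) (XI_Z _ XI_u)|exact: XI_Z _ iC].
rewrite Ex_D; [|exact: XI_Z _ XI1|exact: XI_Z _ XI_u].
rewrite (Ex_Z _ XI1) (Ex_Z _ XI_u) (Ex_Z _ iC) Ex1.
rewrite (Ex_D iB XI_u2) (Ex_D iA XI_vh2) (Ex_D XI_V1 XI_V2).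
by rewrite /M1 /M2; ring.
Qed.


Definition Sm (D : seq (sample R X A)) := \sum_(s <- D) Y s.

Lemma ED_ext k (h1 h2 : seq (sample R X A) -> R) :
  (forall D, size D = k -> h1 D = h2 D) ->
  ED px pt T pi0 Pr k h1 = ED px pt T pi0 Pr k h2.
Proof.
elim: k h1 h2 => [|k IH] h1 h2 hh12 /=; first exact: hh12.
congr E1; apply/funext => s; apply: IH => D sD; apply: hh12 => /=; by rewrite sD.
Qed.

Lemma ED_quad k al be ga :
  ED px pt T pi0 Pr k (fun D => al + be * Sm D + ga * Sm D ^+ 2) =
  al + be * (k%:R * M1) + ga * (k%:R * M2 + k%:R * (k%:R - 1) * M1 ^+ 2).
Proof.
elim: k al be ga => [|k IH] al be ga /=.
  by rewrite /Sm big_nil; ring.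
rewrite (_ : (fun s => _) = (fun s => (al + be * (k%:R * M1) + ga * (k%:R * M2 + k%:R * (k%:R - 1) * M1 ^+ 2))
   + (be + 2 * ga * (k%:R * M1)) * Y s + ga * Y s ^+ 2)).
  by rewrite KEY -addn1 natrD; ring.
apply/funext => s.
rewrite (_ : (fun D => _) = (fun D => (al + be * Y s + ga * Y s ^+ 2)
   + (be + 2 * ga * Y s) * Sm D + ga * Sm D ^+ 2)).
  by rewrite IH; ring.
by apply/funext => D; rewrite /Sm big_cons; ring.
Qed.

Lemma VD_main n : (0 < n)%N ->
  n%:R * VD px pt T pi0 Pr n (opfv_grad pt T phi t' pi zeta j pi0 fhat) = M2 - M1 ^+ 2.
Proof.
move=> n0; have nz : (n%:R : R) != 0 by rewrite pnatr_eq0 -lt0n.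
have Eg : ED px pt T pi0 Pr n (opfv_grad pt T phi t' pi zeta j pi0 fhat) = M1.
  rewrite (ED_ext (h2 := fun D => 0 + (n%:R)^-1 * Sm D + 0 * Sm D ^+ 2)).
    by rewrite ED_quad; field.
  by move=> D sD; rewrite /opfv_grad sD /Sm /Y; ring.
rewrite /VD Eg.
rewrite (ED_ext (h2 := fun D => M1 ^+ 2 + (- 2 * M1 * (n%:R)^-1) * Sm D
   + (n%:R)^-2 * Sm D ^+ 2)).
  by rewrite ED_quad; field.
by move=> D sD; rewrite /opfv_grad sD /Sm /Y; field.
Qed.

Lemma Vx_uu : Vx px uu = Ex px (fun x => uu x ^+ 2) - M1 ^+ 2.
Proof.
rewrite /Vx -/M1.
rewrite (_ : (fun x => _) = (fun x => uu x ^+ 2 + ((- 2 * M1) * uu x + M1 ^+ 2 * 1))).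
  rewrite Ex_D //; last by apply: XI_D; [exact: XI_Z _ XI_u|exact: XI_Z _ XI1].
    rewrite Ex_D; [|exact: XI_Z _ XI_u|exact: XI_Z _ XI1].
    by rewrite (Ex_Z _ XI_u) (Ex_Z _ XI1) Ex1 -/M1; ring.
  exact: XI_u2.
by apply/funext => x; ring.
Qed.

Lemma vh2E : vv * Ex px (fun x => hh x ^+ 2) = Ex px (fun x => vv * hh x ^+ 2).
Proof.
have [v0|v0] := eqVneq vv 0.
  rewrite v0 mul0r (_ : (fun x => _) = (fun _ => 0 * 1)); last first.
    by apply/funext => x; rewrite !mul0r.
  by rewrite (Ex_Z _ XI1) mul0r.
rewrite Ex_Z //.
apply: (intR_ext measurableT _ (XI_Z (vv^-1) XI_vh2)) => x _ /=.
by rewrite mulrA mulVf // mul1r.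
Qed.

Lemma RHS_eq : Ex px (fun x => Et pt T (V1 x)) + Ex px (fun x => Et pt T (V2 x))
  + vv * Ex px (fun x => hh x ^+ 2) + Vx px uu = M2 - M1 ^+ 2.
Proof. rewrite vh2E Vx_uu /M2; ring. Qed.

End Main.


Unset Implicit Arguments. Set Strict Implicit. Set Printing Implicit Defensive.

Theorem propositionF4 (R : realType) (dX : measure_display) (X : measurableType dX)
  (A : finType) (L : eqType) (d : nat) (j : 'I_d)
  (px : probability X R) (T : R) (pt : R -> R) (t' : R) (phi : R -> L)
  (pi0 : X -> R -> A -> R) (pi : 'rV[R]_d -> X -> R -> A -> R) (zeta : 'rV[R]_d)
  (Pr : A -> R.-pker (X * R)%type ~> R) (rmax : R) (fhat : X -> R -> A -> R)
  (n : nat) :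
  (* sample size, target time *)
  (0 < n)%N -> T < t' ->
  (* rewards in [0, rmax] *)
  (forall a x t, Pr a (x, t) `[0, rmax]%classic = 1%E) ->
  (* p(t): a probability density on [0, T] *)
  measurable_fun setT pt -> (forall t, 0 <= pt t) ->
  (\int[lebesgue_measure]_(t in `[0%R, T]%classic) (pt t)%:E = 1)%E ->
  measurable [set s : R | phi s = phi t'] ->
  (* logging policy *)
  (forall x t a, 0 <= pi0 x t a) -> (forall x t, \sum_a pi0 x t a = 1) ->
  (forall a, measurable_fun setT (fun xt : X * R => pi0 xt.1 xt.2 a)) ->
  (* evaluation policy, differentiable in zeta *)
  (forall z x t a, 0 <= pi z x t a) -> (forall z x t, \sum_a pi z x t a = 1) ->
  (forall x t a, differentiable (fun z => pi z x t a) zeta) ->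
  (forall a, measurable_fun setT (fun x => pi zeta x t' a)) ->
  (forall a, measurable_fun setT (fun x => score pi zeta j x t' a)) ->
  (* regressor *)
  (forall a, measurable_fun setT (fun xt : X * R => fhat xt.1 xt.2 a)) ->
  (forall a, measurable_fun setT (fun x => fhat x t' a)) ->
  (* finite second moment of a single summand of the estimator *)
  (E1e px pt T pi0 Pr
     (fun s => ((opfv_term pt T phi t' pi zeta j pi0 fhat s) ^+ 2)%:E) < +oo)%E ->
  (* assumptions of the proposition *)
  (forall x t a, 0 <= t <= T -> 0 < pi0 x t a) ->
  0 < pphi pt T phi t' ->
  (forall x a t, 0 <= t <= T -> indphi phi t t' = 1 ->
     qmean Pr x t a - qmean Pr x t' a = fhat x t a - fhat x t' a) ->
  let w := fun t => indphi phi t t' / pphi pt T phi t' in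
  let s := score pi zeta j in
  let q := qmean Pr in
  n%:R * VD px pt T pi0 Pr n (opfv_grad pt T phi t' pi zeta j pi0 fhat)
  = Ex px (fun x => Et pt T (fun t => Epol pi0 x t (fun a =>
        (w t * (pi zeta x t' a / pi0 x t a) * s x t' a) ^+ 2 * sigma2 Pr x t a)))
  + Ex px (fun x => Et pt T (fun t => w t ^+ 2 *
        Vpol pi0 x t (fun a => pi zeta x t' a / pi0 x t a
                               * (q x t' a - fhat x t' a) * s x t' a)))
  + Vt pt T w * Ex px (fun x =>
        (Epol (pi zeta) x t' (fun a => (q x t' a - fhat x t' a) * s x t' a)) ^+ 2)
  + Vx px (fun x => Epol (pi zeta) x t' (fun a => q x t' a * s x t' a)).
Proof.
move=> n0 tt Hr mpt pt0 pt1 mphi pi00 pi0sum mpi0 _ _ _ mpi ms mf mf' Hfin pi0pos pphi0 Hdelta w s q.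
rewrite (VD_main (rmax := rmax)) //.
rewrite -(RHS_eq (rmax := rmax)) //.
Qed.
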